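(* An instance of the Side-Access Compact Retrieval Problem admits a feasible solution if and only if for every target $b\in\mathcal B$ and every stack $t<s(b)$ we have $h(t)\ge h(b)-R(b)$.
   Context: A slice is a sequence of stacks $T=(1,\dots,m)$, indexed from the entry side (stack $1$) outward; ''left'' means smaller index. Stack $t$ initially consists of $h(t)\ge 0$ unit loads (ULs) stacked without gaps; a UL at height $k$ has exactly $k$ ULs below it in its stack. A pick-list $\mathcal B$ of target ULs is given; target $b$ lies in stack $s(b)$ at initial height $h(b)$; $R(b)$ is the number of targets initially located below $b$ in stack $s(b)$. Retrieval proceeds in cycles $c=1,2,\dots$; $h_c(t)$, $h_c(b)$ are the heights of stack $t$ and of a not-yet-retrieved target $b$ at the start of cycle $c$ ($h_1=h$). In cycle $c$ one chooses clearance levels $\ell_c(t)\in\{0,\dots,h_c(t)\}$: the top $e_c(t)=h_c(t)-\ell_c(t)$ ULs of stack $t$ are lifted for the whole cycle. Then a sequence $(b_{c,1},\dots,b_{c,k})$ of targets is retrieved, with residual heights $d_{c,0}=\ell_c$ and $d_{c,i}(t)=d_{c,i-1}(t)-1$ if $t=s(b_{c,i})$, else $d_{c,i}(t)=d_{c,i-1}(t)$. Retrieving $b$ (stack $t$, height $h=h_c(b)$) as the $i$-th retrieval requires accessibility: (a) $d_{c,i-1}(t)=h+1$ and (b) $d_{c,i-1}(t')=h$ for all $t'<t$. Afterwards lifted ULs are lowered, $h_{c+1}(t)=d_{c,k}(t)+e_c(t)$, and each remaining target's height decreases by the number of targets retrieved in cycle $c$ below it in its stack. Non-targets are never removed. A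 solution is feasible if every target of $\mathcal B$ is retrieved exactly once and is accessible when retrieved. *)

(* Defs.v *)
From mathcomp Require Import all_boot.
Set Implicit Arguments. Unset Strict Implicit. Unset Printing Implicit Defensive.

(* Stacks are indexed by 'I_m (stack 0 is the entry side; "left" = smaller
   index).  A unit load is identified by its initial position: a pair
   (t, k) = (stack, initial height).  A target b is such a pair:
   s(b) = b.1, h(b) = b.2. *)

Definition target (m : nat) := ('I_m * nat)%type.

Definition Rb (m : nat) (B : seq (target m)) (b : target m) : nat :=
  count (fun b' : target m => (b'.1 == b.1) && (b'.2 < b.2)) B.

Definition instance_ok (m : nat) (h : 'I_m -> nat) (B : seq (target m)) :=
  uniq B /\ (forall b, b \in B -> b.2 < h b.1).

Record cycle (m : nat) := Cycle {
  clear : 'I_m -> nat;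
  retr  : seq (target m) }.

Definition decr (m : nat) (d : 'I_m -> nat) (t : 'I_m) : 'I_m -> nat :=
  fun t' => if t' == t then (d t').-1 else d t'.

(* Accessibility of the retrieval sequence, given start-of-cycle target
   heights hb and current residual heights d; also returns final residuals. *)
Fixpoint accessible_seq (m : nat) (hb : target m -> nat) (d : 'I_m -> nat)
    (r : seq (target m)) : Prop :=
  match r with
  | [::] => True
  | b :: r' =>
      d b.1 = (hb b).+1 /\ (forall t' : 'I_m, t' < b.1 -> d t' = hb b) /\
      accessible_seq hb (decr d b.1) r'
  end.

Fixpoint residual (m : nat) (d : 'I_m -> nat) (r : seq (target m)) : 'I_m -> nat :=
  match r with
  | [::] => d
  | b :: r' => residual (decr d b.1) r'
  end.

Definition cycle_ok (m : nat) (hs : 'I_m -> nat) (hb : target m -> nat)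
    (c : cycle m) : Prop :=
  (forall t, clear c t <= hs t) /\ accessible_seq hb (clear c) (retr c).

Definition next_hs (m : nat) (hs : 'I_m -> nat) (c : cycle m) : 'I_m -> nat :=
  fun t => residual (clear c) (retr c) t + (hs t - clear c t).

Definition next_hb (m : nat) (hb : target m -> nat) (c : cycle m) :
    target m -> nat :=
  fun b => hb b - count (fun b' : target m => (b'.1 == b.1) && (hb b' < hb b))
                        (retr c).

Fixpoint cycles_ok (m : nat) (hs : 'I_m -> nat) (hb : target m -> nat)
    (cs : seq (cycle m)) : Prop :=
  match cs with
  | [::] => True
  | c :: cs' => cycle_ok hs hb c /\ cycles_ok (next_hs hs c) (next_hb hb c) cs'
  end.

Definition feasible_solution (m : nat) (h : 'I_m -> nat) (B : seq (target m))
    (cs : seq (cycle m)) : Prop :=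
  perm_eq (flatten (map (@retr m) cs)) B /\
  cycles_ok h (fun b : target m => b.2) cs.

Definition feasible (m : nat) (h : 'I_m -> nat) (B : seq (target m)) : Prop :=
  exists cs, feasible_solution h B cs.

(* Main.v *)
Require Import Defs.
From mathcomp Require Import all_boot.
From mathcomp Require Import zify.
Set Implicit Arguments. Unset Strict Implicit. Unset Printing Implicit Defensive.

Section S.
Variable m : nat.
Implicit Types (hs : 'I_m -> nat) (hb : target m -> nat) (b : target m).

Lemma oeq (x y : 'I_m) : (x == y) = (x == y :> nat). Proof. by []. Qed.

Definition mkc (v : nat) (b : target m) : Defs.cycle m :=
  Cycle (fun t : 'I_m => if (t < b.1)%N then v else if t == b.1 then v.+1 else 0) [:: b].

Definition cnt hb (L : seq (target m)) b :=
  count (fun b' : target m => (b'.1 == b.1) && (hb b' < hb b)) L.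

Definition rr hb : rel (target m) := fun x y =>
  (y.1 < x.1) || ((y.1 == x.1) && (hb x < hb y)).

Lemma suff_ind (L : seq (target m)) : forall hs hb,
  pairwise (rr hb) L ->
  (forall b, b \in L -> hb b < hs b.1) ->
  (forall b, b \in L -> forall t : 'I_m, t < b.1 -> hb b - cnt hb L b <= hs t) ->
  exists cs, flatten (map (@retr m) cs) = L /\ cycles_ok hs hb cs.
Proof.
elim: L => [|b0 L IH] hs hb.
  by move=> _ _ _; exists [::].
rewrite pairwise_cons => /andP[/allP Hall Hpw] H2 H3.
have Hc0 : cnt hb (b0 :: L) b0 = 0.
  rewrite /cnt /= ltnn andbF add0n (eq_in_count (a2 := pred0)) ?count_pred0 //.
  move=> b' /Hall; rewrite /rr /= => /orP[Hl|/andP[/eqP -> Hlt]].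
    by rewrite oeq; apply/negbTE; lia.
  by rewrite eqxx /=; apply/negbTE; lia.
have Hle : forall t : 'I_m, t < b0.1 -> hb b0 <= hs t.
  by move=> t Ht; have := H3 b0 (mem_head _ _) t Ht; rewrite Hc0 subn0.
have HinL : forall b, b \in L -> b \in b0 :: L.
  by move=> b Hb; rewrite in_cons Hb orbT.
have Hlt0 := H2 b0 (mem_head _ _).
set c := mkc (hb b0) b0.
have Hok : cycle_ok hs hb c.
  split.
    move=> t /=; case: ifP => [/Hle //|_]; case: ifP => // /eqP -> //.
  rewrite /= ltnn eqxx; split => //; split => // t' ->; done.
have NH1 : forall t, t != b0.1 -> next_hs hs c t = hs t.
  move=> t Ht; rewrite /next_hs /= /decr (negbTE Ht) /=.
  case: ifP => [/Hle|_]; lia.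
have NH2 : next_hs hs c b0.1 = (hs b0.1).-1.
  rewrite /next_hs /= /decr eqxx ltnn /=; lia.
have NHB : forall b, next_hb hb c b = hb b - ((b0.1 == b.1) && (hb b0 < hb b)).
  by move=> b; rewrite /next_hb /= addn0.
have Habove : forall b, b \in L -> b.1 = b0.1 -> hb b0 < hb b.
  move=> b /Hall; rewrite /rr => /orP[Hl|/andP[_ H]] E //.
  by rewrite E ltnn in Hl.
have Hstk : forall b, b \in L -> b.1 <= b0.1.
  move=> b /Hall; rewrite /rr => /orP[Hl|/andP[/eqP -> _]] //; lia.
have Hiff : forall b b', b \in L -> b' \in L -> b'.1 = b.1 ->
    (next_hb hb c b' < next_hb hb c b) = (hb b' < hb b).
  move=> b b' Hb Hb' E; rewrite !NHB E.
  case: (eqVneq b0.1 b.1) => E0 /=.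
    have := Habove b Hb (esym E0); have := Habove b' Hb' (etrans E (esym E0)).
    lia.
  by rewrite !subn0.
have P1 : pairwise (rr (next_hb hb c)) L.
  apply: (sub_in_pairwise (P := mem L)) Hpw; last by apply/allP.
  move=> x y Hx Hy; rewrite /rr => /orP[->//|/andP[/eqP E H]].
  by rewrite E eqxx Hiff ?H ?orbT.
have P2 : forall b, b \in L -> next_hb hb c b < next_hs hs c b.1.
  move=> b Hb; rewrite NHB.
  case: (eqVneq b0.1 b.1) => E0 /=.
    rewrite -E0 NH2; have := Habove b Hb (esym E0); have := H2 b (HinL b Hb).
    rewrite -E0; lia.
  rewrite subn0 NH1 ?(H2 b (HinL b Hb)) //; by rewrite eq_sym.
have P3 : forall b, b \in L -> forall t : 'I_m, t < b.1 ->
    next_hb hb c b - cnt (next_hb hb c) L b <= next_hs hs c t.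
  move=> b Hb t Ht.
  have Hcnt : cnt (next_hb hb c) L b = cnt hb L b.
    apply: eq_in_count => b' Hb' /=.
    case: (eqVneq b'.1 b.1) => E //=; exact: Hiff.
  rewrite Hcnt NH1; last first.
    by apply/negP => /eqP E; have := Hstk b Hb; rewrite -E; lia.
  have := H3 b (HinL b Hb) t Ht; rewrite /cnt /= -/(cnt hb L b) NHB.
  lia.
have [cs [Hf Hcs]] := IH (next_hs hs c) (next_hb hb c) P1 P2 P3.
exists (c :: cs); split; first by rewrite /= Hf.
by split.
Qed.


Lemma decr_le (d : 'I_m -> nat) t t' : decr d t t' <= d t'.
Proof. rewrite /decr; case: ifP => _ //; exact: leq_pred. Qed.

Lemma residual_le (r : seq (target m)) : forall (d : 'I_m -> nat) t, residual d r t <= d t.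
Proof.
elim: r => [|b r IH] d t //=.
exact: leq_trans (IH _ t) (decr_le _ _ _).
Qed.

Lemma acc_le hb (r : seq (target m)) : forall (d : 'I_m -> nat),
  accessible_seq hb d r -> forall b, b \in r -> forall t : 'I_m, t < b.1 -> hb b <= d t.
Proof.
elim: r => [|b0 r IH] d //= [H1 [H2 H3]] b.
rewrite in_cons => /orP[/eqP -> t Ht|Hb t Ht]; first by rewrite H2.
exact: leq_trans (IH _ H3 b Hb t Ht) (decr_le _ _ _).
Qed.

Lemma cnt_range (D : seq (target m)) (t : 'I_m) lo hi : uniq D ->
  count (fun z : target m => (z.1 == t) && (lo <= z.2 < hi)) D <= hi - lo.
Proof.
move=> HD; rewrite -size_filter.
set F := filter _ D.
have HF : uniq F by rewrite filter_uniq.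
rewrite -(size_map snd) -(size_iota lo (hi - lo)).
apply: uniq_leq_size.
  rewrite map_inj_in_uniq //.
  move=> [x1 x2] [y1 y2]; rewrite !mem_filter /= => /andP[/andP[/eqP -> _] _].
  by move=> /andP[/andP[/eqP -> _] _] ->.
move=> z /mapP [[x1 x2]]; rewrite mem_filter /= => /andP[/andP[_ H] _] ->.
rewrite mem_iota; lia.
Qed.

Lemma count_split (p q1 q2 : pred (target m)) (s : seq (target m)) :
  (forall z, (p z : nat) = q1 z + q2 z) -> count p s = count q1 s + count q2 s.
Proof.
move=> H; elim: s => [|z s IH] //=; rewrite IH H; lia.
Qed.

Lemma key (D : seq (target m)) (x b : target m) : uniq D -> x \notin D -> x.1 = b.1 -> x.2 < b.2 ->
  x.2 - Rb D x < b.2 - Rb D b.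
Proof.
move=> HD Hx E Hlt.
have S : Rb D b = Rb D x + count (fun z : target m => (z.1 == b.1) && (x.2 <= z.2 < b.2)) D.
  rewrite /Rb; apply: count_split => z /=; rewrite E.
  case: (z.1 == b.1) => /=; last by [].
  case: (ltnP z.2 x.2) => H1; case: (ltnP z.2 b.2) => H2 /=; lia.
have C1 := cnt_range b.1 x.2 b.2 (D := x :: D).
rewrite /= Hx HD E eqxx leqnn Hlt /= in C1.
have C2 : Rb D x <= x.2 - 0.
  rewrite /Rb (eq_count (a2 := fun z : target m => (z.1 == x.1) && (0 <= z.2 < x.2))).
    exact: cnt_range.
  by move=> z.
specialize (C1 isT). move: C1 C2; rewrite S; lia.
Qed.

Lemma uniq_notin (s1 s2 : seq (target m)) x : uniq (s1 ++ s2) -> x \in s2 -> x \notin s1.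
Proof. by rewrite cat_uniq => /and3P[_ /hasPn H _] /H. Qed.

Lemma nec (h : 'I_m -> nat) (cs : seq (Defs.cycle m)) : forall hs hb (D : seq (target m)),
  cycles_ok hs hb cs -> uniq (D ++ flatten (map (@retr m) cs)) -> (forall t, hs t <= h t) ->
  (forall b, b \in flatten (map (@retr m) cs) -> hb b = b.2 - Rb D b) ->
  forall b, b \in flatten (map (@retr m) cs) -> forall t : 'I_m, t < b.1 ->
    b.2 - Rb (D ++ flatten (map (@retr m) cs)) b <= h t.
Proof.
elim: cs => [|c cs IH] hs hb D //=.
move=> [[Hcl Hacc] Hrest] Hu Hh Hhb b.
set r := retr c; set F := flatten _.
have HRcat : forall b, Rb (D ++ r ++ F) b >= Rb D b.
  by move=> b'; rewrite /Rb count_cat leq_addr.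
rewrite mem_cat => /orP[Hb t Ht|Hb t Ht].
  have := acc_le Hacc Hb Ht; have := Hcl t; have := Hh t.
  have := Hhb b; rewrite mem_cat Hb => /(_ isT).
  have := HRcat b; lia.
have := IH (next_hs hs c) (next_hb hb c) (D ++ r) Hrest.
rewrite -catA => /(_ Hu); apply => //.
- move=> t0; rewrite /next_hs; have := residual_le r (clear c) t0.
  have := Hcl t0; have := Hh t0; rewrite -/r; lia.
- move=> b' Hb'.
  have Hb'in : b' \in r ++ F by rewrite mem_cat Hb' orbT.
  rewrite /next_hb.
  have -> : count (fun b0 : target m => (b0.1 == b'.1) && (hb b0 < hb b'))
      (retr c) = Rb r b'.
    apply: eq_in_count => x Hx /=.
    case: (eqVneq x.1 b'.1) => E //=.
    have Hxin : x \in r ++ F by rewrite mem_cat Hx.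
    have HuD : uniq D by move: Hu; rewrite cat_uniq => /and3P[].
    have Hneq : x != b'.
      apply/negP => /eqP Exb; move: Hu; rewrite cat_uniq => /and3P[_ _].
      rewrite cat_uniq => /and3P[_ /hasPn /(_ b' Hb')] /=.
      by rewrite -Exb Hx.
    rewrite !Hhb //.
    have Hx2 : x.2 != b'.2.
      apply/negP => /eqP E2; move: Hneq; move: E E2.
      by case: x {Hx Hxin} => x1 x2; case: b' {Hb' Hb'in} => y1 y2 /= -> ->; rewrite eqxx.
    case: (ltngtP x.2 b'.2) => H2.
    + by rewrite (key HuD (uniq_notin Hu Hxin) E H2).
    + have := key HuD (uniq_notin Hu Hb'in) (esym E) H2.
      by move=> H; apply/negbTE; lia.
    + by rewrite H2 eqxx in Hx2.
  rewrite Hhb // /Rb count_cat -/(Rb D b') -/(Rb r b'); lia.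
Qed.

End S.

Theorem lemma1 (m : nat) (h : 'I_m -> nat) (B : seq (target m)) :
  instance_ok h B ->
  (feasible h B <->
   (forall b, b \in B -> forall t : 'I_m, t < b.1 -> b.2 - Rb B b <= h t)).
Proof.
move=> [HuB HhB]; split.
  move=> [cs [Hp Hok]] b Hb t Ht.
  have Hu : uniq ([::] ++ flatten (map (@retr m) cs)) by rewrite /= (perm_uniq Hp).
  have Hbin : b \in flatten (map (@retr m) cs) by rewrite (perm_mem Hp).
  have := nec Hok Hu (fun t => leqnn _) _ Hbin Ht.
  rewrite /= /Rb (permP Hp); apply.
  by move=> b' _; rewrite /Rb /= subn0.
move=> HB.
pose le := fun x y : target m => (y.1 < x.1) || ((y.1 == x.1) && (x.2 <= y.2)).
have Htot : total le.
  move=> x y; rewrite /le !oeq; lia.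
have Htr : transitive le.
  move=> y x z; rewrite /le !oeq; lia.
set L := sort le B.
have HpL : perm_eq L B by rewrite /L; apply/permPl/perm_sort.
have HuL : uniq L by rewrite (perm_uniq HpL).
have Hpw : pairwise le L by rewrite -sorted_pairwise //; exact: sort_sorted.
have Hpw' : pairwise (rr snd) L.
  elim: (L) HuL Hpw => [|x s IH] //=.
  move=> /andP[Hx Hs] /andP[/allP Ha Hp]; rewrite IH // andbT.
  apply/allP => y Hy; have := Ha y Hy; rewrite /le /rr.
  case: (ltnP y.1 x.1) => //= _.
  case: (eqVneq y.1 x.1) => //= E; rewrite leq_eqVlt => /orP[/eqP E2|//].
  exfalso; move: Hx; case: x {Ha} E E2 => x1 x2; case: y Hy => y1 y2 Hy /= E1 E2'; subst.
  by rewrite Hy.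
have P2 : forall b, b \in L -> b.2 < h b.1.
  by move=> b Hb; apply: HhB; rewrite -(perm_mem HpL).
have P3 : forall b, b \in L -> forall t : 'I_m, t < b.1 -> b.2 - cnt snd L b <= h t.
  move=> b Hb t Ht; rewrite /cnt (permP HpL); apply: HB => //.
  by rewrite -(perm_mem HpL).
have [cs [Hf Hcs]] := suff_ind Hpw' P2 P3.
by exists cs; split => //; rewrite Hf.
Qed.
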